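(* Let $G=A*B$ be a free product of groups $A$ and $B$. Then $A$ is multi-malnormal in $G$.
   Context: Notation $x^y=y^{-1}xy$. A normal subsemigroup of a group is a (possibly empty) subset closed under multiplication and conjugation. A subgroup $C$ of a group $H$ is multi-malnormal in $H$ if for every normal subsemigroup $C'$ of $C$ with $1\notin C'$, every $n\ge1$, all $c_1,\dots,c_n\in C'$ and all $h_1,\dots,h_n\in H\setminus C$, one has $c_1^{h_1}\cdots c_n^{h_n}\in H\setminus C$. *)

(* Defs.v *)
From HB Require Import structures.
From mathcomp Require Import all_boot.
Set Implicit Arguments. Unset Strict Implicit. Unset Printing Implicit Defensive.
Local Open Scope group_scope.

Section Defs.
Variable G : groupType.

Definition prodg (s : seq G) : G := foldr (fun x y => x * y) 1 s.

Definition is_subgroup (A : G -> Prop) : Prop :=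
  [/\ A 1, (forall x y, A x -> A y -> A (x * y)) & (forall x, A x -> A x^-1)].

Definition generates2 (A B : G -> Prop) : Prop :=
  forall P : G -> Prop, is_subgroup P ->
    (forall a, A a -> P a) -> (forall b, B b -> P b) -> forall g, P g.

(* A letter (true, a) stands for a in A \ {1}, (false, b) for b in B \ {1}. *)
Definition letter_ok (A B : G -> Prop) (l : bool * G) : Prop :=
  (if l.1 then A l.2 else B l.2) /\ l.2 <> 1.

Fixpoint alternating (s : seq (bool * G)) : Prop :=
  match s with
  | l1 :: ((l2 :: _) as s') => l1.1 <> l2.1 /\ alternating s'
  | _ => True
  end.

(* G is the (internal) free product A * B: A, B subgroups generating G, and
   no nonempty reduced alternating word in nontrivial elements of A and B
   represents 1 (normal form theorem). *)
Definition is_free_product (A B : G -> Prop) : Prop :=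
  [/\ is_subgroup A, is_subgroup B, generates2 A B &
      forall s : seq (bool * G), s <> [::] ->
        (forall l, l \in s -> letter_ok A B l) ->
        alternating s -> prodg (map snd s) <> 1].

Definition normal_subsemigroup (C C' : G -> Prop) : Prop :=
  [/\ (forall x, C' x -> C x),
      (forall x y, C' x -> C' y -> C' (x * y)) &
      (forall x c, C' x -> C c -> C' (x ^ c))].

(* C is multi-malnormal in G (here H = the whole group G). *)
Definition multi_malnormal (C : G -> Prop) : Prop :=
  forall C' : G -> Prop, normal_subsemigroup C C' -> ~ C' 1 ->
    forall s : seq (G * G), s <> [::] ->
      (forall p, p \in s -> C' p.1 /\ ~ C p.2) ->
      ~ C (prodg (map (fun p => p.1 ^ p.2) s)).

End Defs.

(* Main.v *)
Require Import Defs.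
From HB Require Import structures.
From mathcomp Require Import all_boot.
From Stdlib Require Import ClassicalEpsilon.
From mathcomp Require Import zify.

Set Implicit Arguments. Unset Strict Implicit. Unset Printing Implicit Defensive.
Local Open Scope group_scope.

Section FP.
Variable G : groupType.
Variables A B : G -> Prop.
Hypothesis hA : is_subgroup A.
Hypothesis hB : is_subgroup B.

Definition sub (t : bool) (x : G) : Prop := if t then A x else B x.

Lemma sub1 t : sub t 1.
Proof. by case: t; rewrite /sub; [case: hA | case: hB]. Qed.
Lemma subM t x y : sub t x -> sub t y -> sub t (x * y).
Proof. by case: t; rewrite /sub; [case: hA => _ h _ | case: hB => _ h _]; apply: h. Qed.
Lemma subV t x : sub t x -> sub t x^-1.
Proof. by case: t; rewrite /sub; [case: hA => _ _ h | case: hB => _ _ h]; apply: h. Qed.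

Definition nb (x y : bool * G) := x.1 != y.1.
Definition alt (s : seq (bool * G)) := sorted nb s.
Definition hdT (s : seq (bool * G)) := if s is l :: _ then l.1 else true.
Definition lastT (s : seq (bool * G)) := if s is l :: s' then (last l s').1 else true.

Lemma alternatingE s : alternating s <-> alt s.
Proof.
elim: s => [|x [|y s] IH] //=.
rewrite /alt /= in IH *; split.
  by case=> h1 /IH h2; rewrite h2 andbT; apply/eqP.
by case/andP=> /eqP h1 h2; split => //; apply/IH.
Qed.

Lemma alt_cons x s : alt (x :: s) = alt s && ((s == [::]) || (x.1 != hdT s)).
Proof. by case: s => [|y s] //=; rewrite /alt /= andbC. Qed.

Lemma lastT_rcons s x : lastT (rcons s x) = x.1.
Proof. by case: s => [|y s] //=; rewrite last_rcons. Qed.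

Lemma alt_rcons s x : alt (rcons s x) = alt s && ((s == [::]) || (lastT s != x.1)).
Proof. by case: s => [|y s] //=; rewrite /alt /= rcons_path. Qed.

Lemma alt_cat s t : alt (s ++ t) =
  [&& alt s, alt t & (s == [::]) || (t == [::]) || (lastT s != hdT t)].
Proof.
case: s => [|x s] /=; first by rewrite andbT.
rewrite cat_path; case: t => [|y t] /=; first by rewrite !andbT.
by rewrite /nb; case: (path _ x s); case: (path _ y t); rewrite /= ?andbF ?andbT.
Qed.

Definition linv (l : bool * G) := (l.1, l.2^-1).
Definition winv (s : seq (bool * G)) := rev (map linv s).

Lemma winv_cons x s : winv (x :: s) = rcons (winv s) (linv x).
Proof. by rewrite /winv /= rev_cons. Qed.
Lemma winv_rcons s x : winv (rcons s x) = linv x :: winv s.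
Proof. by rewrite /winv map_rcons rev_rcons. Qed.
Lemma winv_cat s t : winv (s ++ t) = winv t ++ winv s.
Proof. by rewrite /winv map_cat rev_cat. Qed.
Lemma winv_nil : winv [::] = [::]. Proof. by []. Qed.
Lemma size_winv s : size (winv s) = size s.
Proof. by rewrite /winv size_rev size_map. Qed.
Lemma winv_eq0 s : (winv s == [::]) = (s == [::]).
Proof. by case: s => // x s; rewrite winv_cons; case: (winv s). Qed.

Lemma alt_winv s : alt (winv s) = alt s.
Proof.
rewrite /alt /winv rev_sorted sorted_map; case: s => [|x s] //=.
by apply: eq_path => a b; rewrite /relpre /nb /= eq_sym.
Qed.

Lemma hdT_winv s : hdT (winv s) = lastT s.
Proof. by case/lastP: s => [|s x] //; rewrite winv_rcons lastT_rcons. Qed.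
Lemma lastT_winv s : lastT (winv s) = hdT s.
Proof. by case: s => [|x s] //; rewrite winv_cons lastT_rcons. Qed.

Definition okw (s : seq (bool * G)) := forall l, l \in s -> letter_ok A B l.
Definition red s := okw s /\ alt s.

Lemma okw_cat s t : okw (s ++ t) <-> okw s /\ okw t.
Proof.
split; first by move=> h; split=> l hl; apply: h; rewrite mem_cat hl ?orbT.
by case=> h1 h2 l; rewrite mem_cat => /orP[] ?; [apply: h1|apply: h2].
Qed.
Lemma okw_cons x s : okw (x :: s) <-> letter_ok A B x /\ okw s.
Proof.
split; first by move=> h; split; [apply: h; rewrite mem_head | move=> l hl; apply: h; rewrite in_cons hl orbT].
by case=> h1 h2 l; rewrite in_cons => /orP[/eqP->|] //; apply: h2.
Qed.
Lemma okw_nil : okw [::]. Proof. by []. Qed.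
Lemma okw_rcons s x : okw (rcons s x) <-> okw s /\ letter_ok A B x.
Proof. rewrite -cats1 okw_cat okw_cons; split=> [[?[]]|[?[]]] //. Qed.

Lemma letter_linv l : letter_ok A B l -> letter_ok A B (linv l).
Proof.
case: l => t x [h1 h2]; split; first exact: (subV (t:=t)).
by move=> /(congr1 (fun y => y^-1)); rewrite invgK invg1.
Qed.

Lemma okw_winv s : okw s -> okw (winv s).
Proof.
elim: s => [|x s IH] //; rewrite winv_cons okw_rcons okw_cons.
by case=> h1 h2; split; [apply: IH | apply: letter_linv].
Qed.

Lemma red_winv s : red s -> red (winv s).
Proof. by case=> h1 h2; split; [apply: okw_winv | rewrite alt_winv]. Qed.

Definition ev (s : seq (bool * G)) : G := prodg (map snd s).
Lemma ev_nil : ev [::] = 1. Proof. by []. Qed.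
Lemma ev_cons x s : ev (x :: s) = x.2 * ev s. Proof. by []. Qed.
Lemma ev_cat s t : ev (s ++ t) = ev s * ev t.
Proof. by elim: s => [|x s IH] /=; rewrite ?mul1g // !ev_cons IH mulgA. Qed.
Lemma ev_rcons s x : ev (rcons s x) = ev s * x.2.
Proof. by rewrite -cats1 ev_cat ev_cons ev_nil mulg1. Qed.
Lemma ev_winv s : ev (winv s) = (ev s)^-1.
Proof.
elim: s => [|x s IH]; first by rewrite invg1.
by rewrite winv_cons ev_rcons IH ev_cons invgM.
Qed.


Lemma ok_sub l : letter_ok A B l -> sub l.1 l.2.
Proof. by case. Qed.
Lemma ok_ne1 l : letter_ok A B l -> l.2 <> 1.
Proof. by case. Qed.

Lemma red_nil : red [::]. Proof. by []. Qed.
Lemma red_consE x s : red (x :: s) -> red s.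
Proof. by case=> /okw_cons [_ h] h'; split => //; move: h'; rewrite alt_cons => /andP[]. Qed.
Lemma red_consL x s : red (x :: s) -> letter_ok A B x.
Proof. by case=> /okw_cons []. Qed.
Lemma red_consH x s : red (x :: s) -> (s = [::] \/ x.1 != hdT s).
Proof. by case=> _; rewrite alt_cons => /andP[_ /orP[/eqP|]]; [left|right]. Qed.
Lemma red_consI x s : letter_ok A B x -> red s -> (s = [::] \/ x.1 != hdT s) -> red (x :: s).
Proof.
move=> hx [h1 h2] h3; split; first by apply/okw_cons.
by rewrite alt_cons h2; case: h3 => [->|->] //; rewrite orbT.
Qed.
Lemma red_catI s t : red s -> red t ->
  (s = [::] \/ t = [::] \/ lastT s != hdT t) -> red (s ++ t).
Proof.
move=> [h1 h2] [h3 h4] h; split; first by apply/okw_cat.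
rewrite alt_cat h2 h4 /=; case: h => [->|[->|->]] //; by rewrite ?orbT.
Qed.
Lemma red_catE s t : red (s ++ t) ->
  [/\ red s, red t & (s = [::] \/ t = [::] \/ lastT s != hdT t)].
Proof.
move=> [/okw_cat[h1 h2]]; rewrite alt_cat => /and3P[h3 h4 /orP[/orP[/eqP e|/eqP e]|e]];
[by split => //; left | by split => //; right; left | by split => //; right; right].
Qed.

Hypothesis hgen : generates2 A B.
Hypothesis hNF : forall s : seq (bool * G), s <> [::] ->
  (forall l, l \in s -> letter_ok A B l) -> alternating s -> prodg (map snd s) <> 1.

Lemma red_ev1 s : red s -> ev s = 1 -> s = [::].
Proof.
case=> h1 h2 e; case: (s =P [::]) => // ne; exfalso.
by apply: (hNF ne h1 _ e); apply/alternatingE.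
Qed.

Lemma push t x s : sub t x -> red s ->
  exists s', [/\ red s', ev s' = x * ev s & size s' <= (size s).+1].
Proof.
move=> hx hs.
case: (eqVneq x 1) => [->|x1]; first by exists s; rewrite mul1g leqnSn.
case: s hs => [|y s] hs.
  exists [:: (t, x)]; split => //; apply: red_consI => //; last by left.
  by split=> //; apply/eqP.
case: (eqVneq y.1 t) => [yt|yt].
  have hy := red_consL hs.
  case: (eqVneq (x * y.2) 1) => [e|ne].
    exists s; split; [exact: red_consE hs | by rewrite ev_cons mulgA e mul1g | by rewrite /= ltnW].
  exists ((t, x * y.2) :: s); split => //; last by rewrite ev_cons ev_cons /= mulgA.
  apply: red_consI; [|exact: red_consE hs|by rewrite -yt; apply: red_consH hs].
  split; last by apply/eqP.
  by apply: subM => //; rewrite -yt; apply: ok_sub.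
exists ((t, x) :: y :: s); split => //.
apply: red_consI => //; last by right; rewrite /= eq_sym.
by split => //; apply/eqP.
Qed.

Lemma mulw s t : red s -> red t ->
  exists u, [/\ red u, ev u = ev s * ev t & size u <= size s + size t].
Proof.
elim: s => [|x s IH] hs ht; first by exists t; rewrite ev_nil mul1g.
have [u0 [hu0 e0 sz0]] := IH (red_consE hs) ht.
have [u [hu e sz]] := push (ok_sub (red_consL hs)) hu0.
exists u; split => //; first by rewrite e e0 ev_cons mulgA.
by rewrite addSn (leq_trans sz) // ltnS.
Qed.

Lemma nf_ex g : exists s, red s /\ ev s = g.
Proof.
pose P g := exists s, red s /\ ev s = g.
have letter1 t x : sub t x -> P x.
  move=> hx; case: (eqVneq x 1) => [->|x1]; first by exists [::].
  exists [:: (t,x)]; split; last by rewrite ev_cons ev_nil mulg1.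
  by apply: red_consI => //; [split => //; apply/eqP | left].
apply: (hgen (P := P)).
- split; first by exists [::].
  + move=> x y [s [hs <-]] [t [ht <-]]; have [u [hu e _]] := mulw hs ht; by exists u.
  + move=> x [s [hs <-]]; exists (winv s); split; [exact: red_winv | exact: ev_winv].
- by move=> a ha; apply: (letter1 true).
- by move=> b hb; apply: (letter1 false).
Qed.

Lemma nf_uniq s t : red s -> red t -> ev s = ev t -> s = t.
Proof.
elim: s t => [|x s IH] [|y t] hs ht e //.
- by symmetry; apply: red_ev1 => //; rewrite -e.
- by apply: red_ev1.
case: (eqVneq x y) => [exy|nxy].
  subst y; congr (_ :: _); apply: IH; [exact: red_consE hs|exact: red_consE ht|].
  by move: e; rewrite !ev_cons => /mulgI.
exfalso; rewrite !ev_cons in e.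
have hx := red_consL hs; have hy := red_consL ht.
have jn : winv s = [::] \/ (x.1, x.2^-1) :: t = [::] \/ lastT (winv s) != hdT ((x.1, x.2^-1) :: t).
  case: (red_consH hs) => [->|h]; [by left | by right; right; rewrite lastT_winv /= eq_sym].
case: (eqVneq x.1 y.1) => [exy1|nexy1].
  set z := x.2^-1 * y.2.
  have z1 : z != 1.
    apply: contraNneq nxy => hz; rewrite /z in hz.
    have e2 : x.2 = y.2 by apply: (mulgI x.2^-1); rewrite mulVg hz.
    by rewrite [x]surjective_pairing [y]surjective_pairing exy1 e2.
  have hw : red (winv s ++ (x.1, z) :: t).
    apply: red_catI; [exact: red_winv (red_consE hs)| |].
      apply: red_consI; [| exact: red_consE ht | by rewrite exy1; apply: red_consH ht].
      split; last by apply/eqP.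
      by apply: subM; [apply: subV; apply: ok_sub | rewrite exy1; apply: ok_sub].
    by case: jn => [->|[//|h]]; [left | right; right].
  suff : winv s ++ (x.1, z) :: t = [::] by case: (winv s).
  apply: red_ev1 => //.
  by rewrite ev_cat ev_cons ev_winv /= /z -mulgA -e mulKg mulVg.
have hw : red (winv s ++ (x.1, x.2^-1) :: y :: t).
  apply: red_catI; [exact: red_winv (red_consE hs)| |by case: jn => [->|[//|h]]; [left | right; right]].
  by apply: red_consI => //; [exact: letter_linv | right].
suff : winv s ++ (x.1, x.2^-1) :: y :: t = [::] by case: (winv s).
apply: red_ev1 => //.
by rewrite ev_cat !ev_cons ev_winv /= -e mulKg mulVg.
Qed.

Definition nf (g : G) : seq (bool * G) :=
  proj1_sig (constructive_indefinite_description _ (nf_ex g)).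
Lemma nf_red g : red (nf g).
Proof. exact: (proj1 (proj2_sig (constructive_indefinite_description _ (nf_ex g)))). Qed.
Lemma nf_ev g : ev (nf g) = g.
Proof. exact: (proj2 (proj2_sig (constructive_indefinite_description _ (nf_ex g)))). Qed.
Lemma nf_evK s : red s -> nf (ev s) = s.
Proof. by move=> hs; apply: nf_uniq => //; [exact: nf_red | exact: nf_ev]. Qed.
Lemma size_nfM x y : size (nf (x * y)) <= size (nf x) + size (nf y).
Proof.
have [u [hu e sz]] := mulw (nf_red x) (nf_red y).
by rewrite !nf_ev in e; rewrite -e nf_evK.
Qed.
Lemma nf_A a : A a -> nf a = if a == 1 then [::] else [:: (true, a)].
Proof.
move=> ha; case: (eqVneq a 1) => [->|a1].
  by rewrite -[1](ev_nil) nf_evK.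
rewrite -[a in nf a]mulg1 -[a * 1]/(ev [:: (true, a)]) nf_evK //.
by apply: red_consI => //; [split => //; apply/eqP | left].
Qed.
Lemma size_nfA a : A a -> size (nf a) <= 1.
Proof. by move=> ha; rewrite nf_A //; case: (a == 1). Qed.


Lemma hdT_cat s t : s != [::] -> hdT (s ++ t) = hdT s.
Proof. by case: s. Qed.
Lemma lastT_cat s t : t != [::] -> lastT (s ++ t) = lastT t.
Proof. by case/lastP: t => // t x _; rewrite -rcons_cat !lastT_rcons. Qed.
Lemma lastT_cons x s : s != [::] -> lastT (x :: s) = lastT s.
Proof. by case: s. Qed.
Lemma hdT_rcons s x : hdT (rcons s x) = if s is [::] then x.1 else hdT s.
Proof. by case: s. Qed.

Lemma red_rcons s x : red (rcons s x) ->
  [/\ red s, letter_ok A B x & (s = [::] \/ lastT s != x.1)].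
Proof.
rewrite -cats1 => /red_catE [h1 h2 h3]; split => //; first exact: red_consL h2.
by case: h3 => [->|[//|h]]; [left|right].
Qed.

Definition SB g := hdT (nf g) = false.
Definition EB g := lastT (nf g) = false.

Lemma hdT_nfA a : A a -> hdT (nf a) = true /\ lastT (nf a) = true.
Proof. by move=> ha; rewrite nf_A //; case: (a == 1). Qed.
Lemma SB_notA g : SB g -> ~ A g.
Proof. by rewrite /SB => h /hdT_nfA [h' _]; rewrite h in h'. Qed.
Lemma EB_notA g : EB g -> ~ A g.
Proof. by rewrite /EB => h /hdT_nfA [_ h']; rewrite h in h'. Qed.

Lemma lemJ y c V : EB y -> A c -> c <> 1 -> SB V ->
  nf (y * c * V) = nf y ++ (true, c) :: nf V.
Proof.
move=> hy hc c1 hV.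
have hu : red (nf y ++ (true, c) :: nf V).
  apply: red_catI; [exact: nf_red | | by right; right; rewrite /EB in hy; rewrite hy].
  apply: red_consI; [by split | exact: nf_red | by right; rewrite hV].
have -> : y * c * V = ev (nf y ++ (true, c) :: nf V) by rewrite ev_cat ev_cons !nf_ev mulgA.
exact: nf_evK.
Qed.

Lemma lastT_nonnil s : lastT s = false -> s != [::].
Proof. by case: s. Qed.
Lemma hdT_nonnil s : hdT s = false -> s != [::].
Proof. by case: s. Qed.

Lemma lemJ_SB y c V : SB y -> EB y -> A c -> c <> 1 -> SB V -> SB (y * c * V).
Proof.
move=> h1 h2 hc c1 hV; rewrite /SB lemJ // hdT_cat //; exact: lastT_nonnil.
Qed.
Lemma lemJ_notA y c V : EB y -> A c -> c <> 1 -> SB V -> ~ A (y * c * V).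
Proof.
move=> h2 hc c1 hV hA'; have := size_nfA hA'.
by rewrite lemJ // size_cat /= addnS ltnS leqn0 addn_eq0 size_eq0 (negbTE (lastT_nonnil h2)).
Qed.

Definition can (h : G) := if nf h is l :: s then (if l.1 then s else l :: s) else [::].
Definition ahead (h : G) := if nf h is l :: s then (if l.1 then l.2 else 1) else 1.

Lemma can_red h : red (can h).
Proof.
rewrite /can; have := nf_red h; case: (nf h) => [|l s] // hs.
by case: (l.1) => //; exact: red_consE hs.
Qed.
Lemma can_hd h : can h = [::] \/ hdT (can h) = false.
Proof.
rewrite /can; have := nf_red h; case: (nf h) => [|l s] hs; first by left.
case: (red_consH hs) => [->|]; case E: (l.1) => //=; try by left.
  by right.
by move=> h1; right; move: h1; case: (hdT s).
by right.
Qed.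
Lemma ahead_A h : A (ahead h).
Proof.
rewrite /ahead; have := nf_red h; case: (nf h) => [|l s] hs; first by case: hA.
case E: (l.1); last by case: hA.
by have := ok_sub (red_consL hs); rewrite /sub E.
Qed.
Lemma ahead_can h : h = ahead h * ev (can h).
Proof.
rewrite -{1}(nf_ev h) /ahead /can; case: (nf h) => [|l s]; first by rewrite mul1g.
by case: (l.1); rewrite ?mul1g.
Qed.
Lemma can_nil h : can h = [::] -> A h.
Proof. by move=> e; rewrite (ahead_can h) e ev_nil mulg1; exact: ahead_A. Qed.
Lemma size_can h : size (can h) <= size (nf h).
Proof. by rewrite /can; case: (nf h) => [|l s] //; case: (l.1). Qed.
Lemma can_ev w : red w -> hdT w = false -> can (ev w) = w.
Proof. by move=> hw hd; rewrite /can nf_evK //; case: w hw hd => [|l s] //= _ ->. Qed.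
Lemma ev_notA w : red w -> hdT w = false -> ~ A (ev w).
Proof. by move=> hw hd /hdT_nfA [h _]; rewrite nf_evK // hd in h. Qed.
Lemma can_notA h : ~ A h -> hdT (can h) = false.
Proof. by move=> nh; case: (can_hd h) => // /can_nil. Qed.

Lemma trich s t : red s -> red t ->
  (exists p, s = p ++ t) \/ (exists q, t = q ++ s) \/
  (exists p q r, [/\ s = p ++ r, t = q ++ r, p != [::], q != [::] &
      [/\ nf (ev p * (ev q)^-1) != [::], hdT (nf (ev p * (ev q)^-1)) = hdT p &
          lastT (nf (ev p * (ev q)^-1)) = hdT q]]).
Proof.
elim/last_ind: s t => [|s1 x IH] t hs ht.
  by right; left; exists t; rewrite cats0.
case/lastP: t ht => [|t1 y] ht.
  by left; exists (rcons s1 x); rewrite cats0.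
have [hs1 hx jx] := red_rcons hs; have [ht1 hy jy] := red_rcons ht.
case: (eqVneq x y) => [exy|nxy].
  subst y; case: (IH t1 hs1 ht1) => [[p ->]|[[q ->]|[p [q [r [-> -> hp hq h]]]]]].
  - by left; exists p; rewrite rcons_cat.
  - by right; left; exists q; rewrite rcons_cat.
  - by right; right; exists p, q, (rcons r x); rewrite !rcons_cat.
right; right; exists (rcons s1 x), (rcons t1 y), [::]; rewrite !cats0.
split => //; try by case: (s1); try by case: (t1).
case: (eqVneq x.1 y.1) => [exy1|nexy1].
  set z := x.2 * y.2^-1.
  have z1 : z != 1.
    apply: contraNneq nxy => hz; rewrite /z in hz.
    have e2 : x.2 = y.2 by apply: (mulIg y.2^-1); rewrite mulgV hz.
    by rewrite [x]surjective_pairing [y]surjective_pairing exy1 e2.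
  have hu : red (s1 ++ (x.1, z) :: winv t1).
    apply: red_catI => //; last by case: jx => [->|h]; [left|right; right].
    apply: red_consI; [|exact: red_winv|].
      split; last by apply/eqP.
      by apply: subM; [apply: ok_sub | rewrite exy1; apply: subV; apply: ok_sub].
    case: jy => [->|h]; [by left | right; rewrite hdT_winv exy1 eq_sym //].
  have ev_u : ev (s1 ++ (x.1, z) :: winv t1) = ev (rcons s1 x) * (ev (rcons t1 y))^-1.
    by rewrite ev_cat ev_cons ev_winv !ev_rcons /z /= invgM !mulgA.
  rewrite -ev_u nf_evK //; split.
  - by case: (s1).
  - by case: (s1).
  - rewrite lastT_cat //; case: (t1) => [|l t2]; first by rewrite /= exy1.
    by rewrite lastT_cons ?winv_eq0 // lastT_winv.
have hu : red (rcons s1 x ++ winv (rcons t1 y)).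
  apply: red_catI => //; [exact: red_winv|].
  by right; right; rewrite lastT_rcons hdT_winv lastT_rcons.
have ev_u : ev (rcons s1 x ++ winv (rcons t1 y)) = ev (rcons s1 x) * (ev (rcons t1 y))^-1.
  by rewrite ev_cat ev_winv.
rewrite -ev_u nf_evK //; split.
- by case: (s1).
- by rewrite hdT_cat //; case: (s1).
- by rewrite lastT_cat ?winv_eq0; [rewrite lastT_winv | case: (t1)].
Qed.


Lemma A1 : A 1. Proof. by case: hA. Qed.
Lemma AM x y : A x -> A y -> A (x * y). Proof. by case: hA => _ h _; apply: h. Qed.
Lemma AV x : A x -> A x^-1. Proof. by case: hA => _ _ h; apply: h. Qed.

Lemma rcons_neq0 (s : seq (bool * G)) x : rcons s x != [::].
Proof. by case: s. Qed.

Lemma can_nilP h : can h = [::] <-> A h.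
Proof.
split; first exact: can_nil.
by move=> ha; rewrite /can nf_A //; case: (h == 1).
Qed.

Lemma trichB w1 w2 : red w1 -> red w2 -> hdT w1 = false -> hdT w2 = false ->
  w1 = w2 \/ (exists p, p != [::] /\ w1 = p ++ w2) \/ (exists p, p != [::] /\ w2 = p ++ w1) \/
  (SB (ev w1 * (ev w2)^-1) /\ EB (ev w1 * (ev w2)^-1)).
Proof.
move=> h1 h2 d1 d2.
case: (trich h1 h2) => [[p e]|[[q e]|[p [q [r [e1 e2 hp hq [_ hh hl]]]]]]].
- case: (eqVneq p [::]) e => [-> ->|hp e]; [by left | by right; left; exists p].
- case: (eqVneq q [::]) e => [-> ->|hq e]; [by left | by right; right; left; exists q].
- right; right; right.
  have -> : ev w1 * (ev w2)^-1 = ev p * (ev q)^-1 by rewrite e1 e2 !ev_cat invgM mulgA mulgK.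
  rewrite /SB /EB hh hl; split.
  - by rewrite -d1 e1 (hdT_cat _ hp).
  - by rewrite -d2 e2 (hdT_cat _ hq).
Qed.

Lemma split_A p w : red (p ++ w) -> p != [::] -> hdT (p ++ w) = false -> hdT w = false ->
  exists p0 a, [/\ p = rcons p0 (true, a), A a, a <> 1, red p0 & SB (ev p0) /\ EB (ev p0)].
Proof.
case/lastP: p => [//|p0 l] hr _ hd hw.
have [hrp hrw jn] := red_catE hr.
have hl1 : l.1 = true.
  case: jn => [e|[e|e]].
  - by move/eqP: e; rewrite (negbTE (rcons_neq0 _ _)).
  - by rewrite e in hw.
  - by move: e; rewrite lastT_rcons hw; case: (l.1).
have [hp0 hl jl] := red_rcons hrp.
have hd' : (if p0 is [::] then l.1 else hdT p0) = false.
  by move: hd; rewrite hdT_cat ?rcons_neq0 // hdT_rcons.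
have hp0n : p0 != [::] by move: hd'; case: (p0) => //; rewrite hl1.
exists p0, l.2; split.
- by rewrite [l]surjective_pairing hl1.
- by have := ok_sub hl; rewrite /sub hl1.
- exact: ok_ne1 hl.
- exact: hp0.
- rewrite /SB /EB nf_evK //; split.
  + by move: hd' hp0n; case: (p0).
  + case: jl => [e|]; first by rewrite e in hp0n.
    by rewrite hl1; case: (lastT p0).
Qed.

Lemma nf_inv_word p : red p -> nf ((ev p)^-1) = winv p.
Proof. by move=> hp; rewrite -ev_winv nf_evK //; exact: red_winv. Qed.

Variable C' : G -> Prop.
Hypothesis hC : normal_subsemigroup A C'.
Hypothesis hC1 : ~ C' 1.

Lemma CA x : C' x -> A x. Proof. by case: hC => h _ _; apply: h. Qed.
Lemma CM x y : C' x -> C' y -> C' (x * y). Proof. by case: hC => _ h _; apply: h. Qed.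
Lemma CJ x c : C' x -> A c -> C' (x ^ c). Proof. by case: hC => _ _ h; apply: h. Qed.
Lemma C_ne1 x : C' x -> x <> 1. Proof. by move=> h e; apply: hC1; rewrite -e. Qed.

Lemma canon_pair d h : C' d -> ~ A h ->
  exists d' w, [/\ C' d', red w, hdT w = false, d ^ h = d' ^ ev w & size w <= size (nf h)].
Proof.
move=> hd nh; exists (d ^ ahead h), (can h); split.
- exact: CJ (ahead_A h).
- exact: can_red.
- exact: can_notA.
- by rewrite {1}(ahead_can h) conjgM.
- exact: size_can.
Qed.

Definition cfgp (p : G * seq (bool * G)) := [/\ C' p.1, red p.2 & hdT p.2 = false].
Definition cfg (L : seq (G * seq (bool * G))) := forall p, p \in L -> cfgp p.
Definition E (L : seq (G * seq (bool * G))) := prodg [seq p.1 ^ ev p.2 | p <- L].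
Lemma E_cons p L : E (p :: L) = p.1 ^ ev p.2 * E L. Proof. by []. Qed.
Lemma cfg_cons p L : cfg (p :: L) <-> cfgp p /\ cfg L.
Proof.
split; first by move=> h; split; [apply: h; rewrite mem_head | move=> l hl; apply: h; rewrite in_cons hl orbT].
by case=> h1 h2 l; rewrite in_cons => /orP[/eqP->|] //; apply: h2.
Qed.
Definition Ms (L : seq (G * seq (bool * G))) := sumn [seq size p.2 | p <- L].
Fixpoint Wm (L : seq (G * seq (bool * G))) : nat :=
  if L is p :: L' then (size L').+1 * size p.2 + Wm L' else 0.
Definition lt3 (L1 L2 : seq (G * seq (bool * G))) :=
  size L1 < size L2 \/ (size L1 = size L2 /\ Ms L1 < Ms L2) \/
  (size L1 = size L2 /\ Ms L1 = Ms L2 /\ Wm L1 < Wm L2).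
Lemma lt3_cons p L1 L2 : lt3 L1 L2 -> lt3 (p :: L1) (p :: L2).
Proof.
rewrite /lt3 /Ms /=; case=> [h|[[h1 h2]|[h1 [h2 h3]]]].
- by left; lia.
- by right; left; split; lia.
- by right; right; rewrite h1; split; [|split]; lia.
Qed.

Lemma conjL L c : cfg L -> A c ->
  exists L', [/\ cfg L', size L' = size L & E L' = c * E L * c^-1].
Proof.
elim: L => [|p L IH] hL hc.
  by exists [::]; split => //; rewrite /E /= mulg1 mulgV.
have [hp hL'] := proj1 (cfg_cons p L) hL.
have [L' [h1 h2 h3]] := IH hL' hc.
case: hp => hp1 hp2 hp3.
have nh : ~ A (ev p.2 * c^-1).
  by move=> hA'; apply: (ev_notA hp2 hp3); have := AM hA' hc; rewrite mulgVK.
have [d' [w [hd' hw hw' e _]]] := canon_pair hp1 nh.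
exists ((d', w) :: L'); split.
- by apply/cfg_cons; split.
- by rewrite /= h2.
- rewrite !E_cons h3 /= -e conjgM conjgE invgK !mulgA mulgVK.
  done.
Qed.



Lemma gid_deg1 (g1 g2 c e : G) : c = g2^-1 * (g1 * g2) -> g1 * (g2 * e) = g2 * (c * e * c^-1) * c.
Proof. by move=> hc; rewrite -mulgA mulgVK hc !mulgA mulgV mul1g. Qed.
Lemma gid_nd1 (g1 g2 c e : G) : c = g2^-1 * (g1 * g2) -> g1 * (g2 * e) = g2 * (c * e).
Proof. by move=> hc; rewrite hc !mulgA mulgV mul1g. Qed.
Lemma gid_deg2 (g1 g2 c e : G) : c = g1 * (g2 * g1^-1) -> g1 * (g2 * e) = c * (g1 * e) * c^-1 * c.
Proof. by move=> hc; rewrite mulgVK hc !mulgA mulgVK. Qed.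
Lemma gid_nd2 (g1 g2 c e : G) : c = g1 * (g2 * g1^-1) -> g1 * (g2 * e) = c * (g1 * e).
Proof. by move=> hc; rewrite hc !mulgA mulgVK. Qed.

Definition RedP L := exists L' c,
  [/\ cfg L', L' != [::], A c, E L = E L' * c & lt3 L' L].
Definition InvP L := if L is p :: _ then exists b V,
  [/\ A b, p.1 * b <> 1, SB V & ev p.2 * E L = p.1 * b * V] else False.

Lemma scan L : cfg L -> L != [::] -> RedP L \/ InvP L.
Proof.
elim: L => [//|[d1 w1] L IH] hL _.
have [[hd1 hw1 hw1'] hL0] := proj1 (cfg_cons _ _) hL.
rewrite /= in hd1 hw1 hw1'.
case: L IH hL hL0 => [|[d2 w2] L1] IH hL hL0.
  right; exists 1, (ev w1); split.
  - exact: A1.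
  - by rewrite mulg1; apply: C_ne1.
  - by rewrite /SB nf_evK.
  - by rewrite /E /= conjgE !mulg1 mulVKg.
have [[hd2 hw2 hw2'] hL1] := proj1 (cfg_cons _ _) hL0.
rewrite /= in hd2 hw2 hw2'.
case: (IH hL0 isT) => [[L' [c [h1 h2 h3 h4 h5]]]|hinv].
  left; exists ((d1, w1) :: L'), c; split => //.
  - by apply/cfg_cons.
  - by rewrite (E_cons _ L') E_cons h4 mulgA.
  - exact: lt3_cons.
case: hinv => b [V [hb hdb hV eV]].
rewrite /= in hdb eV.
have KI : ev w1 * E ((d1, w1) :: (d2, w2) :: L1) = d1 * (ev w1 * (ev w2)^-1) * (d2 * b * V).
  by rewrite -eV E_cons /= conjgE mulgA mulVKg !mulgA mulgVK.
have EL : E ((d1, w1) :: (d2, w2) :: L1) = d1 ^ ev w1 * (d2 ^ ev w2 * E L1) by [].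
have hAd2 : A d2 := CA hd2.
case: (trichB hw1 hw2 hw1' hw2') => [e|[[p [hp e]]|[[p [hp e]]|[hSB hEB]]]].
-
  subst w2; left; exists ((d1 * d2, w1) :: L1), 1; split => //.
  + by apply/cfg_cons; split => //; split => //; apply: CM.
  + exact: A1.
  + by rewrite mulg1 EL E_cons /= conjMg mulgA.
  + by left.
-
  have [p0 [a [ep ha a1 hp0 [sp0 ep0]]]] : exists p0 a,
      [/\ p = rcons p0 (true, a), A a, a <> 1, red p0 & SB (ev p0) /\ EB (ev p0)].
    by apply: (split_A (w := w2)); [rewrite -e | exact: hp | rewrite -e | exact: hw2'].
  have ex : ev w1 * (ev w2)^-1 = ev p0 * a by rewrite e ep ev_cat ev_rcons mulgK.
  rewrite ex in KI.
  have sw1 : size w1 = size p0 + 1 + size w2 by rewrite e ep size_cat size_rcons addn1.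
  case: (eqVneq (a * d2 * b) 1) => [g1e|gn1].
  +
    have [h' eh'] : exists h', h' = ev w1 * d2 ^ ev w2 by eexists.
    have ad : a * d2 = b^-1 by apply: (mulIg b); rewrite mulVg g1e.
    have eh : h' = ev p0 * b^-1 * ev w2.
      by rewrite eh' e ep ev_cat ev_rcons conjgE mulgA mulgK mulgA -(mulgA (ev p0)) ad.
    have sz : size (nf h') <= size w1.
      rewrite eh; apply: (leq_trans (size_nfM _ _)); rewrite nf_evK //.
      have h1 := size_nfA (AV hb); have h2 := size_nfM (ev p0) b^-1.
      rewrite nf_evK // in h2; rewrite sw1 leq_add2r.
      by apply: (leq_trans h2); rewrite leq_add2l.
    have hc : d1 ^ h' = (d2 ^ ev w2)^-1 * (d1 ^ ev w1 * d2 ^ ev w2).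
      by rewrite eh' conjgM; exact: conjgE.
    case: (eqVneq (can h') [::]) => [/can_nilP hA'|/eqP hn].
    *
      have hc' : C' (d1 ^ h') := CJ hd1 hA'.
      have [L1' [hc1 hs1 he1]] := conjL hL1 (CA hc').
      left; exists ((d2, w2) :: L1'), (d1 ^ h'); split => //.
      -- by apply/cfg_cons.
      -- exact: CA hc'.
      -- by rewrite EL E_cons /= he1; apply: gid_deg1.
      -- by left; rewrite /= hs1.
    * have nA' : ~ A h' by move/can_nilP.
      have [d1' [w' [hd1' hw' hw'' ew sw]]] := canon_pair hd1 nA'.
      left; exists ((d2, w2) :: (d1', w') :: L1), 1; split => //.
      -- by apply/cfg_cons; split => //; apply/cfg_cons.
      -- exact: A1.
      -- by rewrite mulg1 EL !E_cons /= -ew; apply: gid_nd1.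
      -- have sw2 : size w2 < size w1.
           by rewrite sw1 -addnA addnC ltn_addr // addn1.
         have sw' : size w' <= size w1 := leq_trans sw sz.
         rewrite /lt3 /Ms /=.
         move: sw2 sw'; generalize (size w1) (size w2) (size w') (size L1) (sumn [seq size p.2 | p <- L1]) (Wm L1).
         move=> x1 x2 x3 k m wm h2 h3.
         case: (ltngtP x3 x1) => [lt|gt|eq].
         ++ by right; left; split => //; lia.
         ++ lia.
         ++ right; right; split => //; split; first by lia.
            rewrite eq; nia.
  +
    right; exists 1, (ev p0 * (a * d2 * b) * V); split.
    * exact: A1.
    * by rewrite mulg1; apply: C_ne1.
    * apply: lemJ_SB => //; last by apply/eqP.
      by apply: AM => //; apply: AM.
    * by rewrite /= KI mulg1 !mulgA.
-
  have [p0 [a [ep ha a1 hp0 [sp0 ep0]]]] : exists p0 a,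
      [/\ p = rcons p0 (true, a), A a, a <> 1, red p0 & SB (ev p0) /\ EB (ev p0)].
    by apply: (split_A (w := w1)); [rewrite -e | exact: hp | rewrite -e | exact: hw1'].
  have ex : ev w1 * (ev w2)^-1 = a^-1 * (ev p0)^-1.
    by rewrite e ep ev_cat ev_rcons !invgM mulVKg.
  rewrite ex in KI.
  have sw2 : size w2 = size p0 + 1 + size w1 by rewrite e ep size_cat size_rcons addn1.
  case: (eqVneq (d1 * a^-1) 1) => [da|dna].
  +
    have ea : d1 = a by apply: divg1_eq.
    have [h'' eh''] : exists h'', h'' = ev w2 * (d1 ^ ev w1)^-1 by eexists.
    have eh : h'' = ev p0 * ev w1.
      rewrite eh'' -conjVg e ep ev_cat ev_rcons conjgE mulgA mulgK mulgA ea mulgK.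
      done.
    have sz : size (nf h'') < size w2.
      rewrite eh; apply: (leq_ltn_trans (size_nfM _ _)); rewrite !nf_evK //.
      by rewrite sw2 ltn_add2r addn1.
    have hc : d2 ^ h'' = d1 ^ ev w1 * (d2 ^ ev w2 * (d1 ^ ev w1)^-1).
      by rewrite eh'' conjgM conjgE invgK.
    case: (eqVneq (can h'') [::]) => [/can_nilP hA'|/eqP hn].
    * have hc' : C' (d2 ^ h'') := CJ hd2 hA'.
      have hL2 : cfg ((d1, w1) :: L1) by apply/cfg_cons.
      have [L1' [hc1 hs1 he1]] := conjL hL2 (CA hc').
      left; exists L1', (d2 ^ h''); split => //.
      -- by rewrite -size_eq0 hs1.
      -- exact: CA hc'.
      -- by rewrite EL he1 E_cons /=; apply: gid_deg2.
      -- by left; rewrite hs1.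
    * have nA' : ~ A h'' by move/can_nilP.
      have [d2' [w'' [hd2' hw' hw'' ew sw]]] := canon_pair hd2 nA'.
      left; exists ((d2', w'') :: (d1, w1) :: L1), 1; split => //.
      -- by apply/cfg_cons; split => //; apply/cfg_cons.
      -- exact: A1.
      -- by rewrite mulg1 EL !E_cons /= -ew; apply: gid_nd2.
      -- have sw' : size w'' < size w2 := leq_ltn_trans sw sz.
         rewrite /lt3 /Ms /=; right; left; split => //.
         by rewrite addnA addnC [size w1 + _]addnC addnA ltn_add2r addnC ltn_add2r.
  + right; exists a^-1, ((ev p0)^-1 * (d2 * b) * V); split.
    * exact: AV.
    * by apply/eqP.
    * apply: lemJ_SB.
      -- by rewrite /SB nf_inv_word // hdT_winv; move: ep0; rewrite /EB nf_evK.
      -- by rewrite /EB nf_inv_word // lastT_winv; move: sp0; rewrite /SB nf_evK.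
      -- exact: AM.
      -- exact: hdb.
      -- exact: hV.
    * by rewrite /= KI !mulgA.
-
  right; exists 1, (ev w1 * (ev w2)^-1 * (d2 * b) * V); split.
  + exact: A1.
  + by rewrite mulg1; apply: C_ne1.
  + by apply: lemJ_SB => //; apply: AM.
  + by rewrite /= KI mulg1 !mulgA.
Qed.


Lemma Efinal_gen n : forall m k L, size L = n -> Ms L = m -> Wm L = k ->
  cfg L -> L != [::] -> ~ A (E L).
Proof.
elim/ltn_ind: n => n IHn m.
elim/ltn_ind: m => m IHm k.
elim/ltn_ind: k => k IHk L hn hm hk hL hL0 hEA.
case: (scan hL hL0) => [[L' [c [h1 h2 h3 h4 h5]]]|hinv].
  rewrite h4 in hEA; have := AM hEA (AV h3); rewrite mulgK => hA'.
  case: h5 => [hlt|[[hs hlt]|[hs [hms hlt]]]].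
  - by apply: (IHn (size L') _ (Ms L') (Wm L') L' erefl erefl erefl h1 h2 hA'); rewrite -hn.
  - by apply: (IHm (Ms L') _ (Wm L') L' _ erefl erefl h1 h2 hA'); [rewrite -hm | rewrite hs].
  - by apply: (IHk (Wm L') _ L' _ _ erefl h1 h2 hA'); [rewrite -hk | rewrite hs | rewrite hms].
case: L hL hL0 hEA hinv {hn hm hk} => [//|[d w] L] hL _ hEA [b [V [hb hdb hV eV]]].
have [[hd hw hw'] _] := proj1 (cfg_cons _ _) hL.
rewrite /= in hdb eV hd hw hw'.
have e : E ((d, w) :: L) = (ev w)^-1 * (d * b) * V by rewrite -mulgA -eV mulKg.
have hEBw : EB (ev w)^-1 by rewrite /EB nf_inv_word // lastT_winv.
have := lemJ_notA hEBw (AM (CA hd) hb) hdb hV.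
by rewrite -e.
Qed.

Lemma Efinal L : cfg L -> L != [::] -> ~ A (E L).
Proof. exact: (Efinal_gen erefl erefl erefl). Qed.

Lemma to_cfg s : (forall p, p \in s -> C' p.1 /\ ~ A p.2) ->
  exists L, [/\ cfg L, size L = size s & E L = prodg [seq p.1 ^ p.2 | p <- s]].
Proof.
elim: s => [|q s IH] hs; first by exists [::].
have [hq1 hq2] := hs q (mem_head _ _).
have hs' : forall p, p \in s -> C' p.1 /\ ~ A p.2.
  by move=> p hp; apply: hs; rewrite in_cons hp orbT.
have [L [h1 h2 h3]] := IH hs'.
have [d [w [hd hw hw' e _]]] := canon_pair hq1 hq2.
exists ((d, w) :: L); split.
- by apply/cfg_cons.
- by rewrite /= h2.
- by rewrite E_cons /= h3 e.
Qed.

Lemma main_sec s : s <> [::] -> (forall p, p \in s -> C' p.1 /\ ~ A p.2) ->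
  ~ A (prodg [seq p.1 ^ p.2 | p <- s]).
Proof.
move=> hs hsp; have [L [h1 h2 h3]] := to_cfg hsp.
rewrite -h3; apply: Efinal h1 _.
by rewrite -size_eq0 h2 size_eq0; apply/eqP.
Qed.

End FP.

Unset Implicit Arguments.
Set Strict Implicit.

Theorem mainTheorem17 (G : groupType) (A B : G -> Prop) :
  is_free_product A B -> multi_malnormal A.
Proof.
case=> hA hB hgen hNF C' hC hC1 s hs hsp.
exact: (main_sec hA hB hgen hNF hC hC1 hs hsp).
Qed.
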